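(* Let $(X,\varepsilon)$ and $(Y,\zeta)$ be locally compact paracompact Hausdorff spaces with coarsely connected proper coarse structures, and let $X+_fW\in\mathrm{Pers}(\varepsilon)$. Let $\pi,\pi':Y\to X$ be coarse maps and define $f^\ast(A)=\mathrm{Cl}_W\big(f(\mathrm{Cl}_X(\pi(A)))\big)$ and $f'^\ast(A)=\mathrm{Cl}_W\big(f(\mathrm{Cl}_X(\pi'(A)))\big)$ for $A$ closed in $Y$. If $\pi$ is close to $\pi'$, then $f^\ast=f'^\ast$.
   Context: $X+_fW$ is $X\sqcup W$ with closed sets the $D$ with $D\cap X$ closed in $X$, $D\cap W$ closed in $W$, $f(D\cap X)\subseteq D$, where $f$ (from closed subsets of $X$ to closed subsets of $W$) sends $\emptyset$ to $\emptyset$ and preserves finite unions. Coarse structures, proper and coarsely connected coarse spaces, coarse maps and closeness are in the sense of Roe ($\pi,\pi'$ close means $\{(\pi(y),\pi'(y)):y\in Y\}\in\varepsilon$). $X+_fW\in\mathrm{Pers}(\varepsilon)$ means: $X+_fW$ is compact Hausdorff with $X$ dense, $W$ compact Hausdorff, and every $e\in\varepsilon$ is perspective, i.e. $\mathrm{Cl}_{(X+_fW)^2}(e)\cap((X+_fW)^2-X^2)\subseteq\{(p,p):p\in W\}$. *)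

(* Defs.v *)
From HB Require Import structures.
From mathcomp Require Import all_boot all_order all_algebra.
From mathcomp Require Import all_classical all_reals all_analysis.
Set Implicit Arguments. Unset Strict Implicit. Unset Printing Implicit Defensive.
Import Order.TTheory GRing.Theory Num.Theory.
Local Open Scope classical_set_scope.

Definition locally_finite_family (T : topologicalType) (I : Type)
    (U : I -> set T) : Prop :=
  forall x : T, exists N : set T,
    nbhs x N /\ finite_set [set i | U i `&` N !=set0].

Definition paracompact (T : topologicalType) : Prop :=
  forall (I : Type) (U : I -> set T),
    (forall i, open (U i)) -> \bigcup_i U i = setT ->
    exists (J : Type) (V : J -> set T),
      [/\ forall j, open (V j),
          \bigcup_j V j = setT,
          forall j, exists i, V j `<=` U i
        & locally_finite_family V].

Definition diagonal (X : Type) : set (X * X) := [set p | p.1 = p.2].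

Definition ent_inv (X : Type) (e : set (X * X)) : set (X * X) :=
  [set p | e (p.2, p.1)].

Definition ent_comp (X : Type) (e1 e2 : set (X * X)) : set (X * X) :=
  [set p | exists y, e1 (p.1, y) /\ e2 (y, p.2)].

Definition is_coarse_structure (X : Type) (E : set_system (X * X)) : Prop :=
  [/\ E (@diagonal X),
      forall e e', E e -> e' `<=` e -> E e',
      forall e, E e -> E (ent_inv e),
      forall e1 e2, E e1 -> E e2 -> E (ent_comp e1 e2)
    & forall e1 e2, E e1 -> E e2 -> E (e1 `|` e2)].

Definition coarse_bounded (X : Type) (E : set_system (X * X)) (B : set X) :=
  E (B `*` B).

Definition coarsely_connected (X : Type) (E : set_system (X * X)) :=
  forall x y : X, E [set (x, y)].

Definition proper_coarse (X : topologicalType) (E : set_system (X * X)) :=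
  [/\ is_coarse_structure E,
      exists e, E e /\ exists U : set (X * X),
                  [/\ open U, @diagonal X `<=` U & U `<=` e]
    & forall B, coarse_bounded E B -> compact (closure B)].

Definition coarse_map (Y X : Type) (zeta : set_system (Y * Y))
    (eps : set_system (X * X)) (pi : Y -> X) : Prop :=
  (forall e, zeta e -> eps [set (pi p.1, pi p.2) | p in e]) /\
  (forall B, coarse_bounded eps B -> coarse_bounded zeta (pi @^-1` B)).

Definition close_maps (Y X : Type) (eps : set_system (X * X))
    (pi pi' : Y -> X) : Prop :=
  eps [set (pi y, pi' y) | y in [set: Y]].

(* f : closed subsets of X -> closed subsets of W, sending the empty set
   to the empty set and preserving finite unions.  Only its values on
   closed sets are ever used. *)
Record bdry_map (X W : topologicalType) := BdryMap {
  bdry_fun :> set X -> set W;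
  bdry_closed : forall A, closed A -> closed (bdry_fun A);
  bdry0 : bdry_fun set0 = set0;
  bdryU : forall A B, closed A -> closed B ->
            bdry_fun (A `|` B) = bdry_fun A `|` bdry_fun B }.

Definition sumf (X W : topologicalType) (f : bdry_map X W) : Type :=
  (X + W)%type.

Definition sumf_closed (X W : topologicalType) (f : bdry_map X W)
    (D : set (X + W)) : Prop :=
  [/\ closed (@inl X W @^-1` D), closed (@inr X W @^-1` D)
    & f (@inl X W @^-1` D) `<=` @inr X W @^-1` D].

Definition sumf_open (X W : topologicalType) (f : bdry_map X W)
    (U : set (X + W)) : Prop := sumf_closed f (~` U).

Lemma bdry_mono (X W : topologicalType) (f : bdry_map X W) (A B : set X) :
  closed A -> closed B -> A `<=` B -> f A `<=` f B.
Proof.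
move=> cA cB AB; have -> : B = A `|` B by rewrite setUidr.
by rewrite bdryU //; apply: subsetUl.
Qed.

Lemma sumf_openT (X W : topologicalType) (f : bdry_map X W) :
  sumf_open f setT.
Proof.
rewrite /sumf_open /sumf_closed setCT !preimage_set0 bdry0.
by split => //; apply: closed0.
Qed.

Lemma sumf_openI (X W : topologicalType) (f : bdry_map X W) :
  setI_closed (sumf_open f).
Proof.
move=> A B [cA1 cA2 sA] [cB1 cB2 sB].
rewrite /sumf_open /sumf_closed setCI !preimage_setU.
split; [exact: closedU|exact: closedU|].
rewrite bdryU //; exact: setUSS.
Qed.

Lemma sumf_open_bigU (X W : topologicalType) (f : bdry_map X W)
    (I : Type) (F : I -> set (X + W)) :
  (forall i, sumf_open f (F i)) -> sumf_open f (\bigcup_i F i).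
Proof.
move=> HF; rewrite /sumf_open /sumf_closed setC_bigcup !preimage_bigcap.
have c1 : closed (\bigcap_(i in [set: I]) (@inl X W @^-1` (~` F i))).
  by apply: closed_bigI => i _; case: (HF i).
split => //.
  by apply: closed_bigI => i _; case: (HF i).
move=> w fw i _; case: (HF i) => ci _ si; apply: si.
by apply: (bdry_mono c1 ci _ fw) => x; apply.
Qed.

HB.instance Definition _ (X W : topologicalType) (f : bdry_map X W) :=
  Choice.on (sumf f).

HB.instance Definition _ (X W : topologicalType) (f : bdry_map X W) :=
  isOpenTopological.Build (sumf f)
    (@sumf_openT X W f) (@sumf_openI X W f) (@sumf_open_bigU X W f).

Definition sumf_inl (X W : topologicalType) (f : bdry_map X W) :
  X -> sumf f := @inl X W.
Definition sumf_inr (X W : topologicalType) (f : bdry_map X W) :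
  W -> sumf f := @inr X W.

Definition perspective (X W : topologicalType) (f : bdry_map X W)
    (e : set (X * X)) : Prop :=
  closure [set ((sumf_inl f p.1, sumf_inl f p.2) : sumf f * sumf f) | p in e]
    `&` ~` [set q : sumf f * sumf f | exists a b, q = (sumf_inl f a, sumf_inl f b)]
  `<=` [set (sumf_inr f w, sumf_inr f w) | w in [set: W]].

Definition Pers (X W : topologicalType) (f : bdry_map X W)
    (eps : set_system (X * X)) : Prop :=
  [/\ compact [set: sumf f], hausdorff_space (sumf f),
      dense (range (sumf_inl f)),
      compact [set: W] /\ hausdorff_space W
    & forall e, eps e -> perspective f e].

Definition fstar (Y X W : topologicalType) (f : bdry_map X W)
    (pi : Y -> X) (A : set Y) : set W :=
  closure (f (closure (pi @` A))).

(* Main.v *)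
Require Import Defs.
From HB Require Import structures.
From mathcomp Require Import all_boot all_order all_algebra.
From mathcomp Require Import all_classical all_reals all_analysis.
Local Open Scope classical_set_scope.

Lemma sumf_closedE (X W : topologicalType) (f : bdry_map X W) (D : set (sumf f)) :
  closed D <-> sumf_closed f D.
Proof. by rewrite -openC /open /= /sumf_open setCK. Qed.

Lemma cf (U V : topologicalType) : continuous (@fst U V).
Proof. move=> x. exact: cvg_fst. Qed.
Lemma cs (U V : topologicalType) : continuous (@snd U V).
Proof. move=> x. exact: cvg_snd. Qed.

Lemma inl_cont (X W : topologicalType) (f : bdry_map X W) :
  continuous (sumf_inl f).
Proof.
apply/continuousP => U oU.
have : closed (~` U) by rewrite closedC.
move=> /sumf_closedE [c1 _ _].
by rewrite -closedC.
Qed.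

Lemma img_closure (T U : topologicalType) (g : T -> U) (S : set T) :
  continuous g -> g @` closure S `<=` closure (g @` S).
Proof.
move=> cg; have cl : closed (g @^-1` closure (g @` S)).
  by apply: preimage_closed; [move=> x _; exact: cg | exact: closed_closure].
have sub : closure S `<=` g @^-1` closure (g @` S).
  rewrite closureE => x; apply; split => // y Sy.
  by apply: subset_closure; exists y.
by move=> _ [x /sub h <-].
Qed.

Lemma closure_inl_a (X W : topologicalType) (f : bdry_map X W) (C : set X) w :
  closed C -> f C w -> closure (sumf_inl f @` C) (sumf_inr f w).
Proof.
move=> cC fCw; rewrite closureE => D [/sumf_closedE [c1 c2 s] sub].
apply: s; apply: (bdry_mono cC c1 _ fCw).
by move=> x Cx; apply: sub; exists x.
Qed.

Lemma closure_inl_b (X W : topologicalType) (f : bdry_map X W) (C : set X) w :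
  closed C -> closure (sumf_inl f @` C) (sumf_inr f w) -> f C w.
Proof.
move=> cC; rewrite closureE => /(_ [set x : sumf f |
  match x with inl a => C a | inr v => f C v end]); apply; split.
  apply/sumf_closedE; split.
  - have -> : (@inl X W @^-1` [set x : sumf f |
      match x with inl a => C a | inr v => f C v end]) = C by [].
    exact: cC.
  - have -> : (@inr X W @^-1` [set x : sumf f |
      match x with inl a => C a | inr v => f C v end]) = f C by [].
    exact: bdry_closed.
  - by [].
by move=> _ [x Cx <-].
Qed.

Arguments img_closure {T U g S}.
Arguments closure_inl_a {X W f C w}.
Arguments closure_inl_b {X W f C w}.

Lemma key (X Y W : topologicalType) (f : bdry_map X W) (pi pi' : Y -> X)
  (e : set (X * X)) (A : set Y) :
  compact [set: sumf f] -> hausdorff_space (sumf f) -> perspective f e ->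
  (forall y, A y -> e (pi y, pi' y)) ->
  f (closure (pi @` A)) `<=` f (closure (pi' @` A)).
Proof.
move=> cT hT pe he w fw.
set S := sumf_inl f @` (pi @` A).
have h1 : closure S (sumf_inr f w).
  have := closure_inl_a (@closed_closure _ (pi @` A) : closed _) fw.
  have -> : closure S = closure (closure S).
    by rewrite -closure_id //; exact: closed_closure.
  apply: closureS; exact: img_closure (@inl_cont _ _ f).
set E := [set ((sumf_inl f (pi y), sumf_inl f (pi' y)) : sumf f * sumf f) | y in A].
set K := closure E.
have cK : compact K.
  apply: (subclosed_compact (@closed_closure _ E : closed _) (compact_setX cT cT)).
  by [].
have cfK : compact (fst @` K).
  apply: continuous_compact => //; apply: continuous_subspaceT; exact: cf.
have clK : closed (fst @` K) by apply: compact_closed.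
have : closure S `<=` fst @` K.
  rewrite closureE => x; apply; split => // _ [_ [y Ay <-] <-].
  exists (sumf_inl f (pi y), sumf_inl f (pi' y)) => //.
  by apply: subset_closure; exists y.
move=> /(_ _ h1) [q Kq q1].
have : [set (sumf_inr f v, sumf_inr f v) | v in [set: W]] q.
  apply: pe; split.
    move: Kq; apply: closureS => _ [y Ay <-].
    by exists (pi y, pi' y) => //; apply: he.
  by move=> [a [b qe]]; rewrite qe /= in q1.
move=> [v _ qv]; rewrite -qv /= in q1; case: q1 => vw; subst v.
have h2 : closure (snd @` E) (sumf_inr f w).
  have cl := @preimage_closed (sumf f * sumf f)%type (sumf f) snd (closure (snd @` E)) (fun x _ => @cs (sumf f) (sumf f) x) (@closed_closure _ _).
  have : K `<=` snd @^-1` closure (snd @` E).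
    rewrite /K closureE => x; apply; split => // z Ez.
    by apply: subset_closure; exists z.
  by move=> /(_ _ Kq); rewrite -qv.
apply: (closure_inl_b (@closed_closure _ (pi' @` A) : closed _)).
move: h2; apply: closureS => _ [_ [y Ay <-] <-] /=.
by exists (pi' y) => //; apply: subset_closure; exists y.
Qed.

Arguments key {X Y W f pi pi' e A}.

Theorem mainTheorem20
  (X Y W : topologicalType)
  (eps : set_system (X * X)) (zeta : set_system (Y * Y))
  (f : bdry_map X W) (pi pi' : Y -> X) :
  locally_compact [set: X] -> paracompact X -> hausdorff_space X ->
  locally_compact [set: Y] -> paracompact Y -> hausdorff_space Y ->
  proper_coarse eps -> coarsely_connected eps ->
  proper_coarse zeta -> coarsely_connected zeta ->
  Pers f eps ->
  coarse_map zeta eps pi -> coarse_map zeta eps pi' ->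
  close_maps eps pi pi' ->
  forall A : set Y, closed A -> fstar f pi A = fstar f pi' A.
Proof.
move=> _ _ _ _ _ _ [[_ _ einv _ _] _ _] _ _ _ [cT hT _ _ pers] _ _ cl A _.
rewrite /fstar; congr closure; apply/seteqP; split.
  apply: (key cT hT (pers _ cl)) => y Ay; by exists y.
apply: (key cT hT (pers _ (einv _ cl))) => y Ay; by exists y.
Qed.
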